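(* Let $G$ be a connected graph on $n\ge 4$ vertices with longest path of length $p$. Let $L_1,L_2,L_3$ be three paths of $G$, each having the vertex $u$ as an endpoint, such that any two of them intersect only in $u$. Suppose $\ell(L_1)=\lceil p/2\rceil$, $\ell(L_2)=p-\lceil p/2\rceil$ and $\ell(L_3)\ge\lceil p/2\rceil-1$. Then $u$ is a cut-vertex of $G$.
   Context: All graphs are finite, simple and undirected. $\ell(P)$ denotes the length (number of edges) of a path $P$. A cut-vertex is a vertex whose removal increases the number of components. *)

(* Defs.v *)
From mathcomp Require Import all_boot.
Set Implicit Arguments. Unset Strict Implicit. Unset Printing Implicit Defensive.

Definition simple_graph (T : finType) (e : rel T) : Prop :=
  symmetric e /\ irreflexive e.

Definition gpath (T : finType) (e : rel T) (s : seq T) : bool :=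
  match s with
  | [::] => false
  | x :: s' => path e x s' && uniq s
  end.

(* length = number of edges *)
Definition plen (T : eqType) (s : seq T) : nat := (size s).-1.

Definition endpoint (T : eqType) (u : T) (s : seq T) : bool :=
  (head u s == u) || (last u s == u).

Definition connected_graph (T : finType) (e : rel T) : Prop :=
  forall x y : T, connect e x y.

Definition longest_path_length (T : finType) (e : rel T) (p : nat) : Prop :=
  (exists s, gpath e s /\ plen s = p) /\
  (forall s, gpath e s -> plen s <= p).

(* G - u : remove vertex u (edges at u are deleted; u itself is excluded
   from the counted vertex set). *)
Definition del_vertex (T : finType) (e : rel T) (u : T) : rel T :=
  fun x y => [&& e x y, x != u & y != u].

Definition cut_vertex (T : finType) (e : rel T) (u : T) : Prop :=
  n_comp e predT < n_comp (del_vertex e u) (predC1 u).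

(* Main.v *)
Require Import Defs.
From mathcomp Require Import all_boot zify.
Set Implicit Arguments. Unset Strict Implicit. Unset Printing Implicit Defensive.

Section S0.
Variables (T : finType) (e : rel T).
Hypothesis esym : symmetric e.





Lemma uniq_sub (B S : seq T) : uniq B -> (forall P : pred T, count P S <= count P B) -> uniq S.
Proof.
move=> uB H; apply: count_mem_uniq => x.
have := H (pred1 x); rewrite (count_uniq_mem _ uB).
case: (boolP (x \in S)) => xS.
  have h0: 0 < count_mem x S.
    by rewrite -has_count; apply/hasP; exists x => /=.
  move: (x \in B) h0 => [] /=; lia.
move=> _; apply/eqP; rewrite -leqn0 leqNgt -has_count.
by apply/hasP => -[y yS /eqP ey]; rewrite -ey yS in xS.
Qed.

Lemma del_path u a s : path (del_vertex e u) a s -> path e a s /\ u \notin s.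
Proof.
elim: s a => //= y s IH a /andP[/and3P[ea _ yu] /IH[ps us]]; split.
  by rewrite ea ps.
by rewrite in_cons negb_or eq_sym yu.
Qed.


End S0.

Section S2.
Variables (T : finType) (r : rel T) (A B : pred T).
Hypothesis dis : forall z, A z -> B z -> False.

Lemma conn_aux s : forall a q0, A a -> all (fun z => ~~ A z && ~~ B z) q0 ->
  uniq (q0 ++ s) -> path r a (q0 ++ s) -> B (last a (q0 ++ s)) ->
  exists a' q b, [/\ A a', B b, path r a' (rcons q b),
     all (fun z => ~~ A z && ~~ B z) q & uniq q].
Proof.
elim: s => [|y s IH] a q0 Aa Hq0 Uq Pq Bl.
  move: Bl; rewrite cats0 => Bl; have := mem_last a q0; rewrite in_cons.
  case/orP => [/eqP El|Hl]; first by rewrite El in Bl; case: (dis Aa Bl).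
  by move/allP: Hq0 => /(_ _ Hl) /andP[_ /negP].
move: Pq Uq Bl; rewrite cat_path last_cat /= => /andP[Pq0 /andP[ry Ps]] Uq Bl.
case Ay: (A y).
  apply: (IH y [::]) => //=.
  by move: Uq; rewrite cat_uniq /= => /and4P[_ _ _].
case By: (B y).
  exists a, q0, y; split => //; first by rewrite rcons_path Pq0.
  by move: Uq; rewrite cat_uniq => /andP[].
apply: (IH a (rcons q0 y)) => //.
- by rewrite all_rcons Ay By Hq0.
- by rewrite cat_rcons.
- by rewrite cat_rcons cat_path Pq0 /= ry.
- by rewrite cat_rcons last_cat.
Qed.

Lemma conn x s : A x -> path r x s -> uniq s -> B (last x s) ->
  exists a' q b, [/\ A a', B b, path r a' (rcons q b),
     all (fun z => ~~ A z && ~~ B z) q & uniq q].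
Proof. by move=> Ax Ps Us Bl; apply: (@conn_aux s x [::]). Qed.
End S2.
Section S.
Variables (T : finType) (e : rel T).
Hypothesis esym : symmetric e.

Lemma sorted_revE s : sorted e (rev s) = sorted e s.
Proof.
rewrite rev_sorted; case: s => //= x s; elim: s x => //= y s IH x.
by rewrite IH esym.
Qed.

Lemma corex u sB sAa b sAb r a s3b :
 path e u sB -> path e u (sAa ++ b :: sAb) -> sorted e (b :: rcons r a) -> path e a s3b ->
 sorted e (rev sB ++ u :: sAa ++ b :: r ++ a :: s3b).
Proof.
move=> HB HA Hr H3.
rewrite sorted_cat_cons -rev_cons sorted_revE /= HB /=.
have := sorted_cat_cons e (u :: sAa) b (r ++ a :: s3b); rewrite /= => ->.
apply/andP; split.
  by move: HA; rewrite cat_path /= rcons_path => /andP[-> /andP[-> _]].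
have := sorted_cat_cons e (b :: r) a s3b; rewrite /= => ->.
by move: Hr; rewrite /= => ->.
Qed.
End S.
Section N.
Variables (T : finType) (e : rel T).
Hypothesis esym : symmetric e.
Lemma norm u L : gpath e L -> endpoint u L -> exists s, [/\ path e u s, uniq (u :: s),
   size s = plen L & forall x, (x \in L) = (x \in u :: s)].
Proof.
case: L => [|x s'] //= /andP[Ps Us]; rewrite /endpoint /= /plen /=.
case/orP => [/eqP xu|/eqP lu].
  by subst x; exists s'; split.
have : sorted e (rev (x :: s')) /\ uniq (rev (x :: s')).
  by rewrite (sorted_revE esym) rev_uniq; split => //.
rewrite lastI rev_rcons lu => -[/= P2 U2]; exists (rev (belast x s')); split => //.
  by rewrite size_rev size_belast.
by move=> z; rewrite mem_rcons !in_cons mem_rev.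
Qed.
End N.
Section C.
Variables (T : finType) (e : rel T).
Hypothesis esym : symmetric e.

Lemma del_connect u x : connect (del_vertex e u) x u -> x = u.
Proof.
move/connectP=> [p]; case/lastP: p => [|p z]; first by move=> _ ->.
rewrite rcons_path last_rcons => /andP[_ H] zu; subst z.
by move: H; rewrite /del_vertex eqxx !andbF.
Qed.

Lemma not_cut u : connected_graph e -> ~ cut_vertex e u ->
  forall x y, x != u -> y != u -> connect (del_vertex e u) x y.
Proof.
move=> Hc; rewrite /cut_vertex => /negP; rewrite -leqNgt => Hle.
have le1 : n_comp e predT <= 1.
  apply/card_le1_eqP => x y /andP[rx _] /andP[ry _].
  have csym := sym_connect_sym esym.
  have := rootP csym (Hc x y); move: rx ry; rewrite /roots => /eqP -> /eqP -> //.
have dsym : connect_sym (del_vertex e u).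
  apply: sym_connect_sym => a b; rewrite /del_vertex esym.
  by case: (e b a); case: (a != u); case: (b != u).
have Hr z : z != u -> root (del_vertex e u) z \in predI (roots (del_vertex e u)) (predC1 u).
  move=> zu; rewrite inE /= roots_root //=; apply/eqP => Ez.
  have := connect_root (del_vertex e u) z; rewrite Ez => /del_connect Ezu.
  by rewrite Ezu eqxx in zu.
move=> x y xu yu; apply/(rootP dsym).
have : n_comp (del_vertex e u) (predC1 u) <= 1 by apply: leq_trans Hle le1.
by move/card_le1_eqP; apply; apply: Hr.
Qed.
End C.
Section F.
Variables (T : finType) (e : rel T).

Lemma gpathE s : gpath e s = [&& s != [::], sorted e s & uniq s].
Proof. by case: s. Qed.

Lemma exists_notin (s : seq T) : size s < #|T| -> exists c, c \notin s.
Proof.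
move=> Hs; case: (pickP (fun z => z \notin s)) => [c Hc|H]; first by exists c.
have: #|T| <= #|s|.
  apply: subset_leq_card; apply/subsetP => z _; move: (H z) => /= /negbFE.
  done.
by have := card_size s; lia.
Qed.

Lemma edge_path : irreflexive e -> connected_graph e -> 1 < #|T| ->
  exists s, gpath e s /\ plen s = 1.
Proof.
move=> irr Hc /card_gt1P [x [y [_ _ xy]]].
have /connectP [w Pw Ey] := Hc x y.
case: w Pw Ey => [|z w] /=; first by move=> _ E; rewrite E eqxx in xy.
move=> /andP[exz _] _; exists [:: x; z]; split => //=.
rewrite exz mem_seq1 /= andbT; apply/negP => /eqP E; subst z.
by rewrite irr in exz.
Qed.
End F.

Section G.
Variables (T : finType) (e : rel T).
Hypothesis esym : symmetric e.
Variable p : nat.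
Hypothesis Hl : forall s, gpath e s -> plen s <= p.

Lemma finalx u sAa b sAb sB r a s3b :
  path e u sB -> path e u (sAa ++ b :: sAb) -> sorted e (b :: rcons r a) -> path e a s3b ->
  uniq (rev sB ++ u :: sAa ++ b :: r ++ a :: s3b) ->
  size sB + size sAa + size r + size s3b + 2 <= p.
Proof.
move=> PB PA Pr P3 U.
have := Hl (s := rev sB ++ u :: sAa ++ b :: r ++ a :: s3b).
rewrite gpathE (corex esym PB PA Pr P3) U /plen !size_cat /= size_cat /= size_rev.
have -> : (rev sB ++ u :: sAa ++ b :: r ++ a :: s3b != [::]) by case: (rev sB).
rewrite size_cat /=; move/(_ isT); lia.
Qed.

Ltac cnt H := apply: (uniq_sub H) => P; rewrite /= ?(count_cat, count_rev) /= ?(count_cat, count_rev) /= ?(count_cat, count_rev) /=; lia.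

Lemma final u sA sB s3 q a b :
  path e u sA -> path e u sB -> path e u s3 -> path e a (rcons q b) ->
  a \in s3 -> b \in sA -> uniq (u :: sA ++ sB ++ s3 ++ q) ->
  2 * size sB + size sA + size s3 + 2 * size q + 2 <= 2 * p.
Proof.
move=> PA PB P3 Pq a3 bA; move: PA; case/splitPr: bA => sAa sAb PA.
move: P3; case/splitPr: a3 => s3a s3b P3 U.
have X : size sB + size sAa + size (rev q) + size s3b + 2 <= p.
  apply: (finalx (b := b) (sAb := sAb) (a := a) PB PA).
  - have : sorted e (rev (a :: rcons q b)) by rewrite (sorted_revE esym).
    by rewrite rev_cons rev_rcons.
  - by move: P3; rewrite cat_path /= => /and3P[].
  - cnt U.
have Y : size sB + size s3a + size q + size sAb + 2 <= p.
  apply: (finalx (b := a) (sAb := s3b) (a := b) PB P3) => //.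
  - by move: PA; rewrite cat_path /= => /and3P[].
  - cnt U.
move: X Y; rewrite !size_cat /= size_rev; lia.
Qed.

Lemma finalc u sA sB q c b :
  path e u sA -> path e u sB -> path e c (rcons q b) ->
  b \in sA -> uniq (u :: sA ++ sB ++ [:: c] ++ q) ->
  size sB + size q + 2 <= p.
Proof.
move=> PA PB Pq bA; move: PA; case/splitPr: bA => sAa sAb PA U.
have X : size sB + size sAa + size (rev q) + size ([::] : seq T) + 2 <= p.
  apply: (@finalx u sAa b sAb sB (rev q) c [::] PB PA) => //.
  - have : sorted e (rev (c :: rcons q b)) by rewrite (sorted_revE esym).
    by rewrite rev_cons rev_rcons.
  - cnt U.
move: X; rewrite size_rev; lia.
Qed.
End G.

Section U.
Variable T : finType.
Lemma nohas (X Y : seq T) : (forall z, z \in X -> z \in Y -> False) -> ~~ has (mem X) Y.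
Proof. by move=> H; apply/hasPn => z zY; apply/negP => zX; apply: (H z). Qed.

Lemma uniq_big (u : T) s1 s2 s3 q : u \notin s1 -> u \notin s2 -> u \notin s3 -> u \notin q ->
  uniq s1 -> uniq s2 -> uniq s3 -> uniq q ->
  (forall z, z \in s1 -> z \in s2 -> False) ->
  (forall z, z \in s1 -> z \in s3 -> False) ->
  (forall z, z \in s2 -> z \in s3 -> False) ->
  (forall z, z \in q -> z \in s1 ++ s2 ++ s3 -> False) ->
  uniq (u :: s1 ++ s2 ++ s3 ++ q).
Proof.
move=> h1 h2 h3 hq U1 U2 U3 Uq d12 d13 d23 dq.
rewrite /= !mem_cat (negbTE h1) (negbTE h2) (negbTE h3) (negbTE hq) /=.
rewrite !cat_uniq U1 U2 U3 Uq !has_cat !negb_or.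
rewrite !nohas //; try (move=> z zX zY).
all: try (move=> z zX zY).
all: try first [ by apply: (d12 z) | by apply: (d13 z) | by apply: (d23 z)
           | by apply: (dq z zY); rewrite !mem_cat zX !orbT
           | by apply: (dq z zX); rewrite !mem_cat zY !orbT
           | by apply: (dq z zY); rewrite !mem_cat zX ].
Qed.
End U.
Lemma uniq_swap (T : finType) (u : T) s1 s2 s3 q :
  uniq (u :: s1 ++ s2 ++ s3 ++ q) -> uniq (u :: s2 ++ s1 ++ s3 ++ q).
Proof.
move=> H; apply: (uniq_sub H) => P; rewrite /= !count_cat; lia.
Qed.

Set Strict Implicit.
Lemma upfacts p : uphalf p <= p /\ p <= 2 * uphalf p /\ 2 * uphalf p <= p + 1.
Proof. have h1 := uphalf_half p; have h2 := odd_double_half p; rewrite -addnn in h2.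
have := leq_b1 (odd p); lia. Qed.
Lemma ar1 p a b c q : a = uphalf p -> b = p - uphalf p -> uphalf p - 1 <= c ->
  2 * b + a + c + 2 * q + 2 <= 2 * p -> False.
Proof. have := upfacts p; lia. Qed.
Lemma ar2 p a b c q : a = uphalf p -> b = p - uphalf p -> uphalf p - 1 <= c ->
  2 * a + b + c + 2 * q + 2 <= 2 * p -> False.
Proof. have := upfacts p; lia. Qed.
Lemma ar3 p a b q : a = uphalf p -> b = p - uphalf p -> uphalf p - 1 <= 0 ->
  b + q + 2 <= p -> False.
Proof. have := upfacts p; lia. Qed.
Lemma ar4 p a b q : a = uphalf p -> b = p - uphalf p -> uphalf p - 1 <= 0 ->
  a + q + 2 <= p -> False.
Proof. have := upfacts p; lia. Qed.
Lemma ar5 p a b n : a = uphalf p -> b = p - uphalf p -> uphalf p - 1 <= 0 -> 4 <= n ->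
  (a + b).+1 < n.
Proof. have := upfacts p; lia. Qed.

Unset Implicit Arguments.
Theorem lemma4 (T : finType) (e : rel T) (p : nat) (u : T)
    (L1 L2 L3 : seq T) :
  simple_graph e -> connected_graph e -> 4 <= #|T| ->
  longest_path_length e p ->
  gpath e L1 -> gpath e L2 -> gpath e L3 ->
  endpoint u L1 -> endpoint u L2 -> endpoint u L3 ->
  (forall x, x \in L1 -> x \in L2 -> x = u) ->
  (forall x, x \in L1 -> x \in L3 -> x = u) ->
  (forall x, x \in L2 -> x \in L3 -> x = u) ->
  plen L1 = uphalf p ->
  plen L2 = p - uphalf p ->
  uphalf p - 1 <= plen L3 ->
  cut_vertex e u.
Proof.
move=> [esym eirr] Hc H4 [_ Hl] G1 G2 G3 E1 E2 E3 D12 D13 D23 l1 l2 l3.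
rewrite /cut_vertex; case: ltnP => // Hn; exfalso.
have NC : ~ cut_vertex e u by rewrite /cut_vertex ltnNge Hn.
have Hd := not_cut esym Hc NC.
have [s1 [P1 U1 S1 M1]] := norm esym G1 E1.
have [s2 [P2 U2 S2 M2]] := norm esym G2 E2.
have [s3 [P3 U3 S3 M3]] := norm esym G3 E3.
rewrite -S1 in l1; rewrite -S2 in l2; rewrite -S3 in l3.
move: U1 U2 U3 => /andP[u1 U1] /andP[u2 U2] /andP[u3 U3].
have d12 : forall z, z \in s1 -> z \in s2 -> False.
  move=> z z1 z2; have Ez : z = u by apply: D12; rewrite ?M1 ?M2 in_cons ?z1 ?z2 orbT.
  by rewrite -Ez z1 in u1.
have d13 : forall z, z \in s1 -> z \in s3 -> False.
  move=> z z1 z2; have Ez : z = u by apply: D13; rewrite ?M1 ?M3 in_cons ?z1 ?z2 orbT.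
  by rewrite -Ez z1 in u1.
have d23 : forall z, z \in s2 -> z \in s3 -> False.
  move=> z z1 z2; have Ez : z = u by apply: D23; rewrite ?M2 ?M3 in_cons ?z1 ?z2 orbT.
  by rewrite -Ez z1 in u2.
case p0: (p == 0).
  move/eqP: p0 => p0; subst p.
  have [s [gs ps]] := edge_path eirr Hc (leq_trans (isT : 1 < 4) H4).
  by have := Hl s gs; rewrite ps.
have [y0 y01] : exists y0, y0 \in s1.
  have up0 : 0 < uphalf p by case: (p) p0.
  move: l1 up0; case: (s1) => [|y t] /=; first by move=> <-.
  by move=> _ _; exists y; rewrite in_cons eqxx.
have y0u : y0 != u by apply: contraNneq u1 => <-.
have [[x0 x03] | s3nil] : (exists x0, x0 \in s3) \/ s3 = [::].
  by case: (s3) => [|x t]; [right | left; exists x; rewrite in_cons eqxx].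
- have x0u : x0 != u by apply: contraNneq u3 => <-.
  have /connectP [w Pw Ew] := Hd x0 y0 x0u y0u.
  move: Ew; case: (shortenP Pw) => w' Pw' Uw' _ Ew.
  have := @conn _ _ (fun z => z \in s3) (fun z => z \in s1 ++ s2) _ x0 w' x03 Pw' _ _.
  case.
  + by move=> z z3; rewrite mem_cat => /orP[z1|z2]; [apply: (d13 z) | apply: (d23 z)].
  + by move: Uw' => /andP[].
  + by rewrite -Ew mem_cat y01.
  move=> a [q [b [a3 bB Pq Aq Uq]]].
  have [Pq' uq] := del_path Pq.
  have BIG : uniq (u :: s1 ++ s2 ++ s3 ++ q).
    apply: uniq_big => //.
    - by move: uq; rewrite mem_rcons in_cons negb_or => /andP[].
    - move=> z zq; move/allP: Aq => /(_ z zq) /andP[/negP n3 /negP n12].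
      by rewrite !mem_cat => /or3P[z1|z2|z3]; [apply: n12; rewrite mem_cat z1
        | apply: n12; rewrite mem_cat z2 orbT | apply: n3].
  move: bB; rewrite mem_cat => /orP [b1|b2].
  + have := final esym Hl P1 P2 P3 Pq' a3 b1 BIG. exact: ar1.
  + have BIG' : uniq (u :: s2 ++ s1 ++ s3 ++ q) by apply: uniq_swap.
    have := final esym Hl P2 P1 P3 Pq' a3 b2 BIG'; exact: ar2.
- rewrite s3nil /= in l3.
  have szc : size (u :: s1 ++ s2) < #|T|.
    rewrite /= size_cat; exact: (ar5 _ _ l1 l2 l3 H4).
  have [c cn] := exists_notin szc.
  move: cn; rewrite in_cons mem_cat !negb_or => /and3P[cu c1 c2].
  have /connectP [w Pw Ew] := Hd c y0 cu y0u.
  move: Ew; case: (shortenP Pw) => w' Pw' Uw' _ Ew.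
  have := @conn _ _ (fun z => z == c) (fun z => z \in s1 ++ s2) _ c w' (eqxx c) Pw' _ _.
  case.
  + move=> z /eqP -> ; rewrite mem_cat => /orP[z1|z2].
      by rewrite z1 in c1.
    by rewrite z2 in c2.
  + by move: Uw' => /andP[].
  + by rewrite -Ew mem_cat y01.
  move=> a [q [b [/eqP ac bB Pq Aq Uq]]]; subst a.
  have [Pq' uq] := del_path Pq.
  have BIG : uniq (u :: s1 ++ s2 ++ [:: c] ++ q).
    apply: uniq_big => //.
    - by rewrite mem_seq1 eq_sym.
    - by move: uq; rewrite mem_rcons in_cons negb_or => /andP[].
    - by move=> z z1; rewrite mem_seq1 => /eqP Ez; rewrite -Ez z1 in c1.
    - by move=> z z1; rewrite mem_seq1 => /eqP Ez; rewrite -Ez z1 in c2.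
    - move=> z zq; move/allP: Aq => /(_ z zq) /andP[/negP n3 /negP n12].
      by rewrite !mem_cat => /or3P[z1|z2|z3]; [apply: n12; rewrite mem_cat z1
        | apply: n12; rewrite mem_cat z2 orbT | apply: n3; rewrite mem_seq1 in z3].
  move: bB; rewrite mem_cat => /orP [b1|b2].
  + have := finalc esym Hl P1 P2 Pq' b1 BIG; exact: ar3.
  + have BIG' : uniq (u :: s2 ++ s1 ++ [:: c] ++ q) by apply: uniq_swap.
    have := finalc esym Hl P2 P1 Pq' b2 BIG'; exact: ar4.
Qed.
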